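(* Let $m,n\geq2$ and let $V\subset[m]\times[n]$ with $|V|=m+n-1$. Then $V$ is a tree if and only if $\det(\mathfrak A(V))\neq0$.
   Context: Write $V=\phi(S)$ with $S=\{i_1<\dots<i_{m+n-1}\}\subset[mn]$, where $\phi(i)=(t,r)$ for $i=(t-1)n+r$, $t\in[m]$, $r\in[n]$. The structure matrix $\mathfrak A(V)=(a_{s,k})$ is the $(m+n-1)\times(m+n-1)$ matrix with, for $\phi(i_k)=(t,r)$: $a_{s,k}=1$ if $s=t<m$; $a_{s,k}=1$ if $s=m$; $a_{s,k}=1$ if $s=m+r<m+n$; $a_{s,k}=0$ otherwise. Graph notions on $[m]\times[n]$: distinct points adjacent iff they share a row or column; a circuit is a cyclic sequence $v_0,\dots,v_{s-1}$ ($s\ge4$) of pairwise distinct points $v_k=(i_k,j_k)$ with (indices mod $s$) $v_k,v_{k+1}$ adjacent and $(i_{k+2}-i_k)(j_{k+2}-j_k)\neq0$ for all $k$; a tree is a connected subset (any two points joined by a path of adjacent points in it) containing no circuit. *)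

(* Defs.v *)
From HB Require Import structures.
From mathcomp Require Import all_boot all_order all_algebra.
Set Implicit Arguments. Unset Strict Implicit. Unset Printing Implicit Defensive.
Import Order.TTheory GRing.Theory Num.Theory.

(* Points of [m] x [n] are encoded 0-based as 'I_m * 'I_n: (t, r) in the
   paper corresponds to (t-1, r-1) here. *)
Definition point (m n : nat) := ('I_m * 'I_n)%type.

Definition adjacent {m n} (a b : point m n) : bool :=
  (a != b) && ((a.1 == b.1) || (a.2 == b.2)).

Definition connected_set {m n} (V : {set point m n}) : Prop :=
  forall a b, a \in V -> b \in V ->
    exists p : seq (point m n),
      [/\ path adjacent a p, last a p = b & all (fun x => x \in V) p].

Definition circuit {m n} (V : {set point m n}) (c : seq (point m n)) : Prop :=
  match c with
  | [::] => False
  | x :: _ =>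
      let s := size c in
      [/\ 4 <= s, uniq c, all (fun y => y \in V) c,
          forall k, k < s -> adjacent (nth x c k) (nth x c ((k.+1) %% s))
        & forall k, k < s ->
            ((nth x c k).1 != (nth x c ((k.+2) %% s)).1) &&
            ((nth x c k).2 != (nth x c ((k.+2) %% s)).2)]
  end.

Definition is_tree {m n} (V : {set point m n}) : Prop :=
  connected_set V /\ ~ (exists c, circuit V c).

(* phi^{-1}(t, r) = (t-1) n + r, shifted to 0-based: t0 * n + r0 *)
Definition pindex {m n} (p : point m n) : nat := p.1 * n + p.2.

Definition sorted_pts {m n} (V : {set point m n}) : seq (point m n) :=
  sort (fun a b => pindex a <= pindex b) (enum V).

(* structure matrix A(V), rows/columns indexed 0-based:
   row s (paper's s+1), column k (paper's k+1) with phi(i_{k+1}) = (t0+1, r0+1):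
   entry 1 iff  s = t0 < m-1,  or s = m-1,  or s = m + r0 with r0 < n-1. *)
Definition struct_mx {m n} (V : {set point m n}) : 'M[int]_(m + n - 1) :=
  \matrix_(s < m + n - 1, k < m + n - 1)
    match nth None (map Some (sorted_pts V)) k with
    | None => 0%R
    | Some p =>
        if [|| (s == p.1 :> nat) && (p.1 < m.-1),
               s == m.-1 :> nat
             | (s == m + p.2 :> nat) && (p.2 < n.-1)]
        then 1%R else 0%R
    end.

(* Main.v *)
Require Import Defs.
From HB Require Import structures.
From mathcomp Require Import all_boot all_order all_algebra.
From mathcomp Require Import zify.
Import Order.TTheory GRing.Theory Num.Theory.

Module Helpers.
Set Implicit Arguments. Unset Strict Implicit. Unset Printing Implicit Defensive.

Definition line {m n} (b : bool) (p q : point m n) : bool :=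
  if b then p.1 == q.1 else p.2 == q.2.

Lemma line_trans {m n} b (p q r : point m n) :
  line b p q -> line b q r -> line b p r.
Proof. by case: b => /= /eqP -> /eqP ->. Qed.

Lemma line_sym {m n} b (p q : point m n) : line b p q = line b q p.
Proof. by case: b; rewrite /= eq_sym. Qed.

Lemma pt_neq {m n} (p q : point m n) : (p != q) = (p.1 != q.1) || (p.2 != q.2).
Proof. by case: p q => [a b] [c d]; rewrite /= xpair_eqE negb_and. Qed.

Lemma alt_differ {m n} t (a b d : point m n) :
  a != b -> line t a b -> b != d -> line (~~ t) b d ->
  (a.1 != d.1) && (a.2 != d.2).
Proof.
rewrite !pt_neq; case: t => ab; rewrite /line /= => /eqP e1 bd /eqP e2.
- rewrite e1 -e2; rewrite e1 eqxx /= in ab; rewrite e2 eqxx orbF in bd.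
  by rewrite bd ab.
- rewrite e1 -e2; rewrite e1 eqxx orbF in ab; rewrite e2 eqxx /= in bd.
  by rewrite bd ab.
Qed.

Lemma modS_mod k L : (k.+1 %% L).+1 %% L = k.+2 %% L.
Proof. have -> : k.+2 = k.+1 + 1 by rewrite addn1. by rewrite -modnDml addn1. Qed.

Lemma odd_mod_succ k L : ~~ odd L -> k < L ->
  odd (k.+1 %% L) = ~~ odd k.
Proof.
move=> ev lk; case: (ltnP k.+1 L) => hk; first by rewrite modn_small.
have eL : L = k.+1 by lia.
by rewrite eL modnn /=; rewrite eL /= in ev; case: (odd k) ev.
Qed.

Lemma altcyc_circuit {m n} (V : {set point m n}) (c : seq (point m n)) b0 :
  ~~ odd (size c) -> 0 < size c -> uniq c -> all (fun y => y \in V) c ->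
  (forall x k, k < size c ->
     (nth x c k != nth x c (k.+1 %% size c)) &&
     line (b0 (+) odd k) (nth x c k) (nth x c (k.+1 %% size c))) ->
  circuit V c.
Proof.
case: c => [//|x c'] ev _ uq allV H.
set c := x :: c' in ev uq allV H *.
set L := size c in ev H *.
have Hd : forall k, k < L ->
  ((nth x c k).1 != (nth x c (k.+2 %% L)).1) &&
  ((nth x c k).2 != (nth x c (k.+2 %% L)).2).
  move=> k lk; have /andP[h1 h2] := H x k lk.
  have lk1 : k.+1 %% L < L by rewrite ltn_mod; lia.
  have /andP[h3 h4] := H x _ lk1.
  rewrite modS_mod in h3 h4.
  apply: (alt_differ h1 h2 h3).
  by move: h4; rewrite odd_mod_succ // addbN.
have s4 : 4 <= L.
  have s2 : 2 <= L by rewrite /L /c /=; move: ev; rewrite /L /c /=; case: (c').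
  have [s2e|] := eqVneq L 2; last first.
    move=> ne; have : L != 3 by apply/negP => /eqP e; rewrite e in ev.
    lia.
  have := Hd 0 (ltac:(lia)).
  by rewrite s2e modnn eqxx.
split=> //.
move=> k lk; have /andP[h1 h2] := H x k lk.
rewrite /adjacent h1 /=; move: h2; rewrite /line; case: (b0 (+) odd k) => /= ->; by rewrite ?orbT.
Qed.

Lemma odd_pred d : odd d -> ~~ odd (d - 1).
Proof. by case: d => //= d; rewrite subn1. Qed.

Lemma even_pred L : ~~ odd L -> 0 < L -> odd L.-1.
Proof. by case: L => //= L; rewrite negbK. Qed.

Definition step {m n} (S : {set point m n}) b p :=
  odflt p [pick q in S | (q != p) && line b p q].

Fixpoint walk {m n} (S : {set point m n}) p0 k :=
  if k is k'.+1 then step S (~~ odd k') (walk S p0 k') else p0.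

Lemma walk_circuit {m n} (V S : {set point m n}) p0 :
  S \subset V -> p0 \in S ->
  (forall b p, p \in S -> exists q, [&& q \in S, q != p & line b p q]) ->
  exists c, circuit V c.
Proof.
move=> SV p0S HS.
have stepP b p : p \in S ->
    [&& step S b p \in S, step S b p != p & line b p (step S b p)].
  move=> pS; rewrite /step; case: pickP => [q /andP[-> /andP[-> ->]] //|].
  by move=> H0; have [q /and3P[q1 q2 q3]] := HS b p pS; move: (H0 q); rewrite q1 q2 q3.
set w := walk S p0.
have wS k : w k \in S by elim: k => [|k IH] //=; case/and3P: (stepP (~~ odd k) _ IH).
have wst k : (w k.+1 != w k) && line (~~ odd k) (w k) (w k.+1).
  by case/and3P: (stepP (~~ odd k) _ (wS k)) => _ -> ->.
have wV k : w k \in V by apply: (subsetP SV).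
(* pigeonhole *)
have exj : exists j, w j \in map w (iota 0 j).
  set K := #|{: point m n}|.+1.
  have : has (fun j => w j \in map w (iota 0 j)) (iota 0 K).
    apply/negPn/negP => /hasPn H.
    have U M : M <= K -> uniq (map w (iota 0 M)).
      elim: M => [//|M IH] hM.
      rewrite -addn1 iotaD map_cat cat_uniq IH ?(ltnW hM) //= andbT orbF.
      by apply: H; rewrite mem_iota.
    have := card_uniqP (U K (leqnn K)).
    rewrite size_map size_iota => e.
    by have := max_card (mem (map w (iota 0 K))); rewrite e /K ltnn.
  by case/hasP => j _ hj; exists j.
case: (ex_minnP exj) => j hj jmin.
have notin b a : b < j -> a < b -> w a != w b.
  move=> hb hab; apply/eqP => e.
  have : w b \in map w (iota 0 b) by rewrite -e map_f // mem_iota.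
  by move/jmin; rewrite leqNgt hb.
have inj : {in [pred x | x < j] &, injective w}.
  move=> a b; rewrite !inE => ha hb e; case: (ltngtP a b) => // hab.
    by move: (notin b a hb hab); rewrite e eqxx.
  by move: (notin a b ha hab); rewrite e eqxx.
have uqw a L : a + L <= j -> uniq (map w (iota a L)).
  move=> hL; rewrite map_inj_in_uniq ?iota_uniq //.
  move=> x y; rewrite !mem_iota => /andP[_ hx] /andP[_ hy]; apply: inj; rewrite inE; lia.
have allw a L : all (fun y => y \in V) (map w (iota a L)).
  by apply/allP => y /mapP [z _ ->].
have nthw a L x k : k < L -> nth x (map w (iota a L)) k = w (a + k).
  by move=> hk; rewrite (nth_map 0) ?size_iota // nth_iota.
set i := index (w j) (map w (iota 0 j)).
have hi : i < j by move: hj; rewrite -index_mem size_map size_iota.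
have wi : w i = w j.
  by have := nth_index (w 0) hj; rewrite -/i (nth_map 0) ?size_iota // nth_iota.
have dn1 : j != i.+1.
  by apply/eqP => e; move: (wst i); rewrite -e -wi eqxx.
case/boolP: (odd (j - i)) => hd.
-
  set L := j - i - 1.
  exists (map w (iota i.+1 L)).
  apply: (@altcyc_circuit _ _ _ _ (~~ odd i.+1)); rewrite ?size_map ?size_iota.
  + exact: odd_pred.
  + have : j - i != 2 by apply/eqP => e; rewrite e in hd.
    rewrite /L; lia.
  + by apply: uqw; rewrite /L; lia.
  + exact: allw.
  move=> x k hk; rewrite nthw //.
  have Lev : ~~ odd L by apply: odd_pred.
  case: (ltnP k.+1 L) => hk1.
    rewrite modn_small // nthw // addnS eq_sym.
    case/andP: (wst (i.+1 + k)) => -> /=.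
    by rewrite oddD /=; case: (odd i); case: (odd k).
  have ek : k = L.-1 by lia.
  have -> : k.+1 = L by lia.
  rewrite modnn nthw ?addn0; last by lia.
  have okk : odd k by rewrite ek; apply: even_pred => //; lia.
  apply/andP; split.
    apply/negP => /eqP e; have := inj _ _ _ _ e; rewrite !inE => h.
    have : i.+1 + k = i.+1 by apply: h; lia.
    have : L != 1 by apply/negP => /eqP e1; rewrite e1 in Lev.
    lia.
  rewrite okk addbT negbK /=.
  have ej : (i.+1 + k).+1 = j by rewrite /L in ek; lia.
  case/andP: (wst (i.+1 + k)) => _; rewrite ej -wi.
  have -> : odd (i.+1 + k) = odd i by rewrite oddD okk /= addbT negbK.
  move=> h1; case/andP: (wst i) => _ h2.
  exact: line_trans h1 h2.
-
  set L := j - i.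
  exists (map w (iota i L)).
  apply: (@altcyc_circuit _ _ _ _ (~~ odd i)); rewrite ?size_map ?size_iota.
  + exact: hd.
  + rewrite /L; lia.
  + by apply: uqw; rewrite /L; lia.
  + exact: allw.
  move=> x k hk; rewrite nthw //.
  have -> : nth x (map w (iota i L)) (k.+1 %% L) = w (i + k).+1.
    case: (ltnP k.+1 L) => hk1.
      by rewrite modn_small // nthw // addnS.
    have -> : k.+1 = L by lia.
    rewrite modnn nthw ?addn0 ?wi; last by lia.
    by congr w; rewrite /L in hk hk1; lia.
  rewrite eq_sym; case/andP: (wst (i + k)) => -> /=.
  by rewrite oddD addNb.
Qed.
Local Open Scope ring_scope.

Definition gs {m n} (s : nat) (p : point m n) : int :=
  (((s == p.1 :> nat) && (p.1 < m.-1))%N%:R + (s == m.-1)%N%:R +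
   ((s == m + p.2)%N && (p.2 < n.-1))%N%:R)%R.

Lemma spts_perm {m n} (V : {set point m n}) : perm_eq (sorted_pts V) (enum V).
Proof. by rewrite /sorted_pts perm_sort. Qed.

Lemma spts_size {m n} (V : {set point m n}) : size (sorted_pts V) = #|V|.
Proof. by rewrite (perm_size (spts_perm V)) cardE. Qed.

Lemma spts_uniq {m n} (V : {set point m n}) : uniq (sorted_pts V).
Proof. by rewrite (perm_uniq (spts_perm V)) enum_uniq. Qed.

Lemma spts_mem {m n} (V : {set point m n}) p : (p \in sorted_pts V) = (p \in V).
Proof. by rewrite (perm_mem (spts_perm V)) mem_enum. Qed.

Lemma struct_entry {m n} (V : {set point m n}) (hV : #|V| = (m + n - 1)%N) x0
  (s k : 'I_(m + n - 1)) :
  struct_mx V s k = gs s (nth x0 (sorted_pts V) k).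
Proof.
rewrite mxE (nth_map x0); last by rewrite spts_size hV.
set p := nth x0 _ _; rewrite /gs; have o1 := ltn_ord p.1; have o2 := ltn_ord p.2.
case: (boolP ((s == p.1 :> nat) && (p.1 < m.-1))%N) => [/andP[/eqP e1 l1]|_];
case: (boolP (s == m.-1 :> nat)) => [/eqP e2|_];
case: (boolP ((s == m + p.2 :> nat) && (p.2 < n.-1))%N) => [/andP[/eqP e3 l3]|_];
rewrite /= ?addr0 ?add0r //; lia.
Qed.

Lemma sumV {m n} (V : {set point m n}) N (hN : size (sorted_pts V) = N) x0
  (F : point m n -> int) :
  \sum_(k < N) F (nth x0 (sorted_pts V) k) = \sum_(p in V) F p.
Proof.
transitivity (\sum_(p <- sorted_pts V) F p); last first.
  by rewrite (perm_big _ (spts_perm V)) big_enum.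
by rewrite (big_nth x0) hN big_mkord.
Qed.

Ltac gsolve p :=
  rewrite /gs; have o1 := ltn_ord p.1; have o2 := ltn_ord p.2;
  repeat (case: eqP => /= ?); repeat (case: ltnP => /= ?);
  rewrite ?addr0 ?add0r //; try lia.

Lemma gs_row {m n} t (p : point m n) : (t < m.-1)%N -> gs t p = (p.1 == t :> nat)%:R.
Proof. move=> ht; gsolve p. Qed.

Lemma gs_mid {m n} (p : point m n) : gs m.-1 p = 1.
Proof. gsolve p. Qed.

Lemma gs_col {m n} r (p : point m n) : (r < n.-1)%N -> gs (m + r) p = (p.2 == r :> nat)%:R.
Proof. move=> hr; gsolve p. Qed.

Lemma sum_sel {m n} (V : {set point m n}) (Y : point m n -> int) (P : pred (point m n)) :
  \sum_(q in V) Y q * (P q)%:R = \sum_(q in V | P q) Y q.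
Proof.
rewrite big_mkcondr; apply: eq_bigr => q _; case: (P q); by rewrite ?mulr1 ?mulr0.
Qed.

Lemma tree_det {m n} (hm : (2 <= m)%N) (hn : (2 <= n)%N) (V : {set point m n})
  (hV : #|V| = (m + n - 1)%N) :
  ~ (exists c, circuit V c) -> \det (struct_mx V) != 0.
Proof.
move=> nocirc; rewrite -det_tr; apply/negP => /det0P [v vn0 vA].
have x0 : point m n.
  split; [exists 0%N; lia | exists 0%N; lia].
set N := (m + n - 1)%N in v vn0 vA *.
set sp := sorted_pts V.
have hN : size sp = N by rewrite /sp spts_size hV.
pose y (k : nat) : int := oapp (fun o : 'I_N => v 0 o) 0 (insub k).
pose Y (p : point m n) := y (index p sp).
have key : forall s : 'I_N, \sum_(p in V) Y p * gs s p = 0.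
  move=> s; have := congr1 (fun M : 'M[int]_(1, N) => M 0 s) vA; rewrite !mxE => e; rewrite -[RHS]e.
  rewrite -(sumV hN x0 (fun p => Y p * gs s p)); apply: eq_bigr => k _.
  rewrite mxE (struct_entry hV x0); congr (_ * _).
  rewrite /Y index_uniq ?hN //.
  2: exact: spts_uniq.
  by rewrite /y (valK k : insub (k : nat) = Some k).
have Rrow : forall t : 'I_m, (t < m.-1)%N -> \sum_(q in V | q.1 == t) Y q = 0.
  move=> t ht; have hs : (t < N)%N by rewrite /N; lia.
  have := key (Ordinal hs); rewrite /=.
  under eq_bigr => q _ do rewrite gs_row //.
  by rewrite sum_sel.
have Rcol : forall r : 'I_n, (r < n.-1)%N -> \sum_(q in V | q.2 == r) Y q = 0.
  move=> r hr; have hs : (m + r < N)%N by rewrite /N; lia.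
  have := key (Ordinal hs); rewrite /=.
  under eq_bigr => q _ do rewrite gs_col //.
  by rewrite sum_sel.
have Tot : \sum_(q in V) Y q = 0.
  have hs : (m.-1 < N)%N by rewrite /N; lia.
  have := key (Ordinal hs); rewrite /=.
  by under eq_bigr => q _ do rewrite gs_mid mulr1.
have Rall : forall t : 'I_m, \sum_(q in V | q.1 == t) Y q = 0.
  move=> t; case: (ltnP t m.-1) => ht; first exact: Rrow.
  move: Tot; rewrite (partition_big (fun q => q.1) xpredT) //= (bigD1 t) //=.
  rewrite [X in _ + X]big1 ?addr0 // => t' ne; apply: Rrow.
  have := ltn_ord t'; have := ltn_ord t; move/eqP: ne => ne.
  have : (t' : nat) <> t by move=> e; apply: ne; apply: val_inj.
  lia.
have Call : forall r : 'I_n, \sum_(q in V | q.2 == r) Y q = 0.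
  move=> r; case: (ltnP r n.-1) => hr; first exact: Rcol.
  move: Tot; rewrite (partition_big (fun q => q.2) xpredT) //= (bigD1 r) //=.
  rewrite [X in _ + X]big1 ?addr0 // => r' ne; apply: Rcol.
  have := ltn_ord r'; have := ltn_ord r; move/eqP: ne => ne.
  have : (r' : nat) <> r by move=> e; apply: ne; apply: val_inj.
  lia.
have Lall : forall b p, \sum_(q in V | line b p q) Y q = 0.
  move=> [] p /=.
    by rewrite -[RHS](Rall p.1); apply: eq_bigl => q; rewrite eq_sym.
  by rewrite -[RHS](Call p.2); apply: eq_bigl => q; rewrite eq_sym.
have [k hk] : exists k, v 0 k != 0.
  apply/existsP; apply: contraNT vn0 => /existsPn H; apply/eqP/rowP => k.
  by rewrite mxE; apply/eqP; move: (H k); rewrite negbK.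
set S := [set q in V | Y q != 0].
have hk' : (k < size sp)%N by rewrite hN.
set p0 := nth x0 sp k.
have p0S : p0 \in S.
  rewrite inE -spts_mem mem_nth //=.
  rewrite /Y /p0 index_uniq //; last exact: spts_uniq.
  by rewrite /y (valK k : insub (k : nat) = Some k).
apply: nocirc; apply: (@walk_circuit _ _ V S p0) => //.
  by apply/subsetP => q; rewrite inE => /andP[].
move=> b p; rewrite inE => /andP [pV Yp].
apply/existsP; apply: contraTT (introT eqP (Lall b p)) => /existsPn H.
rewrite (bigD1 p) //=; last by rewrite pV; case: b {H}; rewrite /= eqxx.
rewrite big1 ?addr0 // => q /andP [/andP [qV lq] qp].
move: (H q); rewrite inE qV qp lq /= andbT negbK => /eqP //.
Qed.

Lemma sgn_even k : ((-1) ^+ k.*2 : int) = 1.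
Proof. by rewrite -signr_odd odd_double. Qed.

Lemma altsum_even (h : nat -> int) q :
  (forall k, (k < q)%N -> h k.*2 = h k.*2.+1) ->
  \sum_(0 <= k < q.*2) (-1) ^+ k * h k = 0.
Proof.
elim: q => [|q IH] H; first by rewrite big_geq.
rewrite doubleS !big_nat_recr //= IH; last by move=> k hk; apply: H; lia.
rewrite add0r exprS sgn_even H //.
by rewrite mulr1 mulN1r mul1r addrN.
Qed.

Lemma rot_sum (h : nat -> int) L : ~~ odd L ->
  \sum_(0 <= k < L) (-1) ^+ k * h (k.+1 %% L)%N = - \sum_(0 <= k < L) (-1) ^+ k * h k.
Proof.
case: L => [|L'] ev; first by rewrite !big_geq // oppr0.
rewrite big_nat_recr //= modnn big_nat_recl //=.
have oL : odd L' by move: ev; rewrite /= negbK.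
rewrite -signr_odd oL expr1.
have e1 : \sum_(0 <= i < L') (-1) ^+ i * h (i.+1 %% L'.+1)%N =
    \sum_(0 <= i < L') (-1) ^+ i * h i.+1.
  by apply: eq_big_nat => k hk; rewrite modn_small //; lia.
have e2 : \sum_(0 <= i < L') (-1) ^+ i.+1 * h i.+1 =
    - \sum_(0 <= i < L') (-1) ^+ i * h i.+1.
  by rewrite -sumrN; apply: eq_bigr => k _; rewrite exprS mulN1r mulNr.
by rewrite e1 e2 expr0 mul1r opprD opprK addrC mulN1r.
Qed.

Lemma altsum (h : nat -> int) L flag :
  ~~ odd L -> (forall k, (k < L)%N -> odd k = flag -> h k = h (k.+1 %% L)%N) ->
  \sum_(0 <= k < L) (-1) ^+ k * h k = 0.
Proof.
move=> ev H.
have eL : L = (L./2).*2 by rewrite -{1}(odd_double_half L) (negbTE ev).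
case: flag H => H.
- apply/eqP; rewrite -oppr_eq0 -rot_sum //; apply/eqP.
  have := @altsum_even (fun k => h (k.+1 %% L)%N) L./2; rewrite -eL; apply => k hk.
  rewrite modn_small; last by lia.
  apply: H; first by lia.
  by rewrite /= odd_double.
- rewrite eL; apply: altsum_even => k hk.
  rewrite H; first by rewrite modn_small //; lia.
    by lia.
  by rewrite odd_double.
Qed.

Lemma odd_predE L : (0 < L)%N -> odd L = ~~ odd L.-1.
Proof. by case: L => //= L _; rewrite negbK. Qed.

Lemma circuit_alt {m n} (V : {set point m n}) x c' : circuit V (x :: c') ->
  [/\ (4 <= size (x :: c'))%N, uniq (x :: c'), all (fun y => y \in V) (x :: c'),
     ~~ odd (size (x :: c')) &
     exists b0, forall k, (k < size (x :: c'))%N ->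
       line (b0 (+) odd k) (nth x (x :: c') k) (nth x (x :: c') (k.+1 %% size (x :: c'))%N)].
Proof.
move=> [h4 uq allV Had Hdf].
set c := x :: c' in h4 uq allV Had Hdf *.
set L := size c in h4 Had Hdf *.
pose bb k := (nth x c k).1 == (nth x c (k.+1 %% L)%N).1.
have lineb k : (k < L)%N -> line (bb k) (nth x c k) (nth x c (k.+1 %% L)%N).
  move=> hk; rewrite /line; case: ifP => // /negbT; rewrite /bb => nb.
  by move: (Had k hk); rewrite /adjacent (negbTE nb) /= => /andP[_].
have flip k : (k < L)%N -> bb (k.+1 %% L)%N = ~~ bb k.
  move=> hk; have hk1 : (k.+1 %% L < L)%N by rewrite ltn_mod; lia.
  have a0 := Had k hk; have a1 := Had _ hk1; rewrite modS_mod in a1.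
  have := Hdf k hk; rewrite /bb modS_mod.
  move: a0 a1; rewrite /adjacent.
  set p := nth x c k; set q := nth x c (k.+1 %% L)%N; set r := nth x c (k.+2 %% L)%N.
  case/andP=> pq /orP[/eqP e1 | /eqP e2]; case/andP=> qr /orP[/eqP f1|/eqP f2];
    case/andP => d1 d2.
  - by rewrite e1 f1 eqxx in d1.
  - rewrite e1 eqxx /=; move: qr; rewrite pt_neq f2 eqxx orbF.
    by move/negbTE.
  - rewrite f1 eqxx /=; move: pq; rewrite pt_neq e2 eqxx orbF.
    by [].
  - by rewrite e2 f2 eqxx in d2.
have bbk k : (k < L)%N -> bb k = bb 0%N (+) odd k.
  elim: k => [|k IH] hk; first by rewrite addbF.
  have := flip k (ltnW hk); rewrite modn_small // => ->.
  by rewrite IH ?(ltnW hk) //= addbN.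
have L0 : (0 < L)%N by lia.
have ev : ~~ odd L.
  have hk : (L.-1 < L)%N by lia.
  have := flip _ hk; rewrite prednK // modnn (bbk L.-1) // => e.
  have oL : odd L.-1 by move: e; case: (odd L.-1); case: (bb 0%N).
  by rewrite odd_predE // oL.
split=> //; exists (bb 0%N) => k hk.
by rewrite -bbk //; apply: lineb.
Qed.

Definition g1 {m} (s : nat) (t : 'I_m) : int := ((s == t :> nat) && (t < m.-1))%N%:R.
Definition g2 {m} (s : nat) : int := (s == m.-1)%N%:R.
Definition g3 {m n} (s : nat) (r : 'I_n) : int := ((s == m + r)%N && (r < n.-1))%N%:R.

Lemma gsE {m n} s (p : point m n) : gs s p = g1 s p.1 + @g2 m s + @g3 m n s p.2.
Proof. by []. Qed.

Lemma circ_det {m n} (V : {set point m n}) (hV : #|V| = (m + n - 1)%N) c :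
  circuit V c -> \det (struct_mx V) = 0.
Proof.
case: c => [//|x c'] hc.
have [h4 uq allV ev [b0 Hb]] := circuit_alt hc.
set c := x :: c' in h4 uq allV ev Hb *.
set L := size c in h4 ev Hb *.
apply/eqP; rewrite -det_tr; apply/det0P.
set N := (m + n - 1)%N.
set sp := sorted_pts V.
have hN : size sp = N by rewrite /sp spts_size hV.
pose F p : int := if p \in c then (-1) ^+ (index p c) else 0.
exists (\row_(k < N) F (nth x sp k)).
  have xV : x \in V by move: allV => /allP; apply; rewrite inE eqxx.
  have hk0 : (index x sp < N)%N by rewrite -hN index_mem spts_mem.
  apply/negP => /eqP /rowP /(_ (Ordinal hk0)); rewrite !mxE /= nth_index ?spts_mem //.
  by rewrite /F inE eqxx /= eqxx expr0.
apply/rowP => s; rewrite !mxE.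
rewrite (eq_bigr (fun k : 'I_N => F (nth x sp k) * gs s (nth x sp k))); last first.
  by move=> k _; rewrite [(\row_k0 _) 0 k]mxE [(_^T) k s]mxE (struct_entry hV x).
rewrite (sumV hN x (fun p => F p * gs s p)).
transitivity (\sum_(p <- c) (-1) ^+ (index p c) * gs s p).
  rewrite big_uniq // [RHS]big_mkcond [LHS]big_mkcond; apply: eq_bigr => p _.
  rewrite /F; case: (boolP (p \in c)) => pc.
    by have -> : p \in V by move: allV => /allP; apply.
  by rewrite mul0r; case: (p \in V).
rewrite (big_nth x) -/L.
rewrite (eq_big_nat _ _ (F2 := fun k => (-1) ^+ k * gs s (nth x c k))); last first.
  by move=> k /andP[_ hk]; rewrite index_uniq.
under eq_bigr => k _ do rewrite gsE !mulrDr.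
rewrite !big_split /=.
have A1 : \sum_(0 <= k < L) (-1) ^+ k * g1 s (nth x c k).1 = 0.
  apply: (@altsum (fun k => g1 s (nth x c k).1) L (~~ b0)) => // k hk ok.
  by move: (Hb k hk); rewrite ok addbN addbb /= => /eqP ->.
have A2 : \sum_(0 <= k < L) (-1) ^+ k * @g2 m s = 0.
  by apply: (@altsum (fun k => @g2 m s) L false).
have A3 : \sum_(0 <= k < L) (-1) ^+ k * @g3 m n s (nth x c k).2 = 0.
  apply: (@altsum (fun k => @g3 m n s (nth x c k).2) L b0) => // k hk ok.
  by move: (Hb k hk); rewrite ok addbb /= => /eqP ->.
by rewrite A1 A2 A3 !addr0.
Qed.

Lemma sum_delta N (u : nat -> int) X (C : bool) :
  \sum_(s < N) u s * ((s == X :> nat) && C)%N%:R = if C && (X < N)%N then u X else 0.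
Proof.
case: C => /=; last by rewrite big1 // => s _; rewrite andbF mulr0.
case: (ltnP X N) => hX.
  rewrite (bigD1 (Ordinal hX)) //= eqxx mulr1 big1 ?addr0 // => s ne.
  have -> : (s == X :> nat) = false.
    by apply/negP => /eqP e; move: ne; rewrite -val_eqE /= e eqxx.
  by rewrite mulr0.
rewrite big1 // => s _; have -> : (s == X :> nat) = false by apply/negP => /eqP e; have := ltn_ord s; lia.
by rewrite mulr0.
Qed.

Lemma adjacent_sym {m n} (p q : point m n) : adjacent p q = adjacent q p.
Proof. by rewrite /adjacent eq_sym [q.1 == _]eq_sym [q.2 == _]eq_sym. Qed.

Lemma pot_det {m n} (hm : (2 <= m)%N) (hn : (2 <= n)%N) (V : {set point m n})
  (hV : #|V| = (m + n - 1)%N) (P : pred (point m n)) :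
  (forall p q, p \in V -> q \in V -> adjacent p q -> P p = P q) ->
  (exists2 p, p \in V & P p) ->
  (forall q, q \in V -> P q -> (q.2 : nat) != n.-1) ->
  \det (struct_mx V) = 0.
Proof.
move=> Pcl [p0 p0V Pp0] Pcol.
apply/eqP/det0P.
set N := (m + n - 1)%N.
set sp := sorted_pts V.
have hN : size sp = N by rewrite /sp spts_size hV.
pose hr (t : nat) := [exists q, [&& q \in V, P q & (q.1 == t :> nat)]].
pose hc (r : nat) := [exists q, [&& q \in V, P q & (q.2 == r :> nat)]].
pose a (t : nat) : int := (hr t)%:R.
pose b (r : nat) : int := - (hc r)%:R.
pose u (s : nat) : int :=
  if (s < m.-1)%N then a s - a m.-1 else if s == m.-1 then a m.-1 else b (s - m)%N.
have hrP p : p \in V -> hr p.1 = P p.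
  move=> pV; apply/existsP/idP => [[q /and3P [qV Pq /eqP e]]|Pp].
    case: (eqVneq q p) => [<- //|qp].
    rewrite (Pcl p q) // adjacent_sym /adjacent qp /=.
    by apply/orP; left; apply/eqP/val_inj.
  by exists p; rewrite pV Pp eqxx.
have hcP p : p \in V -> hc p.2 = P p.
  move=> pV; apply/existsP/idP => [[q /and3P [qV Pq /eqP e]]|Pp].
    case: (eqVneq q p) => [<- //|qp].
    rewrite (Pcl p q) // adjacent_sym /adjacent qp /=.
    by apply/orP; right; apply/eqP/val_inj.
  by exists p; rewrite pV Pp eqxx.
have hcn : hc n.-1 = false.
  apply/existsP => [[q /and3P [qV Pq /eqP e]]].
  by move: (Pcol q qV Pq); rewrite e eqxx.
have x : point m n := p0.
exists (\row_(s < N) u s).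
  apply/negP => /eqP /rowP H.
  have h1 : (m.-1 < N)%N by rewrite /N; lia.
  have := H (Ordinal h1); rewrite !mxE /= /u ltnn eqxx => am.
  have ap : a p0.1 = 1 by rewrite /a hrP // Pp0.
  case: (ltnP p0.1 m.-1) => hp.
    have h2 : (p0.1 < N)%N by rewrite /N; lia.
    by have := H (Ordinal h2); rewrite !mxE /= /u hp ap am subr0.
  have e : (p0.1 : nat) = m.-1 by have := ltn_ord p0.1; lia.
  by move: am; rewrite -e ap.
apply/rowP => k; rewrite !mxE.
set p := nth x sp k.
rewrite (eq_bigr (fun s : 'I_N => u s * gs s p)); last first.
  by move=> s _; rewrite [(\row_k0 _) 0 s]mxE (struct_entry hV x).
under eq_bigr => s _ do rewrite gsE !mulrDr.
rewrite !big_split /=.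
rewrite /g1 sum_delta.
rewrite (eq_bigr (fun s : 'I_N => u s * ((s == m.-1 :> nat) && true)%N%:R)); last first.
  by move=> s _; rewrite andbT.
rewrite sum_delta /g3 sum_delta.
have o1 := ltn_ord p.1; have o2 := ltn_ord p.2.
have -> : (m.-1 < N)%N by rewrite /N; lia.
rewrite /u ltnn eqxx /=.
have pV : p \in V by rewrite -spts_mem mem_nth // hN.
have e0 : a p.1 + b p.2 = 0.
  by rewrite /a /b hrP // hcP //; case: (P p); rewrite ?subrr ?oppr0 ?addr0.
case: (ltnP p.1 m.-1) => h1 /=.
  rewrite (_ : (p.1 < N)%N); last by rewrite /N; lia.
  rewrite subrK.
  case: (ltnP p.2 n.-1) => h2 /=.
    rewrite (_ : (m + p.2 < N)%N); last by rewrite /N; lia.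
    have -> : (m + p.2 < m.-1)%N = false by lia.
    have -> : (m + p.2 == m.-1) = false by apply/negP => /eqP; lia.
    by rewrite addKn.
  have e2 : (p.2 : nat) = n.-1 by lia.
  by rewrite addr0; move: e0; rewrite /b e2 hcn oppr0 addr0.
have e1 : (p.1 : nat) = m.-1 by lia.
rewrite add0r.
case: (ltnP p.2 n.-1) => h2 /=.
  rewrite (_ : (m + p.2 < N)%N); last by rewrite /N; lia.
  have -> : (m + p.2 < m.-1)%N = false by lia.
  have -> : (m + p.2 == m.-1) = false by apply/negP => /eqP; lia.
  by rewrite addKn -e1.
have e2 : (p.2 : nat) = n.-1 by lia.
by rewrite addr0 -e1; move: e0; rewrite /b e2 hcn oppr0 addr0.
Qed.

Lemma path_allV {m n} (V : {set point m n}) a p :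
  path (fun x y => adjacent x y && (y \in V)) a p -> all (fun y => y \in V) p.
Proof.
elim: p a => [//|q p IH] a /= /andP [/andP [_ qV] hp].
by rewrite qV (IH q hp).
Qed.

Lemma det_conn {m n} (hm : (2 <= m)%N) (hn : (2 <= n)%N) (V : {set point m n})
  (hV : #|V| = (m + n - 1)%N) :
  \det (struct_mx V) != 0 -> connected_set V.
Proof.
move=> hd a b aV bV.
pose e := fun x y : point m n => adjacent x y && (y \in V).
case: (boolP (connect e a b)) => [/connectP [p pth ->] | nc].
  exists p; split=> //; last exact: path_allV pth.
  by apply: sub_path pth => x y /andP [].
exfalso; move: hd; apply/negP; rewrite negbK; apply/eqP.
have cl : forall p q, p \in V -> q \in V -> adjacent p q ->
    connect e a p = connect e a q.
  move=> p q pV qV apq; apply/idP/idP => h; apply: (connect_trans h); apply: connect1.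
    by rewrite /e apq qV.
  by rewrite /e adjacent_sym apq pV.
case: (boolP [exists q, [&& q \in V, connect e a q & (q.2 == n.-1 :> nat)]]).
- case/existsP => q' /and3P [q'V cq' /eqP e'].
  apply: (@pot_det _ _ hm hn V hV (fun q => ~~ connect e a q)).
  + by move=> p q pV qV apq /=; rewrite (cl p q).
  + by exists b.
  move=> q qV /= ncq; apply/negP => /eqP eq.
  case: (eqVneq q' q) => [eqq|neq]; first by rewrite -eqq cq' in ncq.
  move: ncq; rewrite -(cl q' q) // ?cq' // /adjacent neq /=.
  by apply/orP; right; apply/eqP/val_inj; rewrite /= e' eq.
- move/existsPn => H.
  apply: (@pot_det _ _ hm hn V hV (connect e a)).
  + exact: cl.
  + by exists a => //; apply: connect0.
  move=> q qV cq; move: (H q); rewrite qV cq.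
  by [].
Qed.

End Helpers.
Import Helpers.
Unset Implicit Arguments. Set Strict Implicit.

Theorem theorem3p1 (m n : nat) (hm : 2 <= m) (hn : 2 <= n)
  (V : {set point m n}) (hV : #|V| = m + n - 1) :
  is_tree V <-> (\det (struct_mx V) != 0)%R.
Proof.
split.
  by case=> _ nc; apply: tree_det.
move=> hd; split; first exact: det_conn.
by move=> [c hc]; move: hd; rewrite (circ_det hV hc) eqxx.
Qed.
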